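(* Let $S\subseteq\mathbb{N}^k$ be a slice. There is a finite set $F\subseteq S$ such that $S=\bigcup_{\mathbf{u}\in F}(\mathbf{u}+M_{\mathbf{u}})$.
   Context: $\le$ is the componentwise order on $\mathbb{N}^k$; for $X\subseteq\mathbb{N}^k$, $\min X$ is the (finite) set of its minimal elements and $X^*$ the submonoid generated by $X$. A slice is a set $S\subseteq\mathbb{N}^k$ such that whenever $\mathbf{u},\mathbf{u}+\mathbf{v},\mathbf{u}+\mathbf{w}\in S$ for $\mathbf{u},\mathbf{v},\mathbf{w}\in\mathbb{N}^k$, then $\mathbf{u}+\mathbf{v}+\mathbf{w}\in S$. For $\mathbf{u}\in S$ let $S-\mathbf{u}=\{\mathbf{v}\in\mathbb{N}^k\mid\mathbf{u}+\mathbf{v}\in S\}$ and $M_{\mathbf{u}}=(\min((S-\mathbf{u})\setminus\{\mathbf{0}\}))^*$. *)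

(* Defs.v *)
From mathcomp Require Import all_boot.
Set Implicit Arguments. Unset Strict Implicit. Unset Printing Implicit Defensive.

Definition vec (k : nat) := {ffun 'I_k -> nat}.

Definition vzero {k} : vec k := [ffun => 0].
Definition vadd {k} (u v : vec k) : vec k := [ffun i => u i + v i].

Definition vle {k} (u v : vec k) : bool := [forall i, u i <= v i].

Definition slice {k} (S : vec k -> Prop) : Prop :=
  forall u v w : vec k, S u -> S (vadd u v) -> S (vadd u w) ->
    S (vadd (vadd u v) w).

Definition shift {k} (S : vec k -> Prop) (u : vec k) : vec k -> Prop :=
  fun v => S (vadd u v).

Definition minset {k} (X : vec k -> Prop) : vec k -> Prop :=
  fun x => X x /\ forall y, X y -> vle y x -> y = x.

Inductive genmon {k} (X : vec k -> Prop) : vec k -> Prop :=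
| genmon0 : genmon X vzero
| genmonS : forall x m, X x -> genmon X m -> genmon X (vadd x m).

Definition Mu {k} (S : vec k -> Prop) (u : vec k) : vec k -> Prop :=
  genmon (minset (fun v => shift S u v /\ v <> vzero)).

(* Main.v *)
From Stdlib Require Import IndefiniteDescription Classical.
Require Import Defs.
From mathcomp Require Import all_boot zify.
Set Implicit Arguments. Unset Strict Implicit. Unset Printing Implicit Defensive.

Section V.
Variable k : nat.
Implicit Types u v w : vec k.

Definition vsub u v : vec k := [ffun i => u i - v i].
Definition vsize u : nat := \sum_(i < k) u i.

Lemma vaddC u v : vadd u v = vadd v u.
Proof. by apply/ffunP=> i; rewrite !ffunE addnC. Qed.
Lemma vaddA u v w : vadd (vadd u v) w = vadd u (vadd v w).
Proof. by apply/ffunP=> i; rewrite !ffunE addnA. Qed.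
Lemma vadd0 u : vadd u vzero = u.
Proof. by apply/ffunP=> i; rewrite !ffunE addn0. Qed.
Lemma vleP u v : reflect (forall i, u i <= v i) (vle u v).
Proof. exact: forallP. Qed.
Lemma vle_trans u v w : vle u v -> vle v w -> vle u w.
Proof. move=> /vleP H1 /vleP H2; apply/vleP=> i; exact: leq_trans (H1 i) (H2 i). Qed.
Lemma vle_refl u : vle u u.
Proof. by apply/vleP. Qed.
Lemma vle_addr u v : vle u (vadd u v).
Proof. by apply/vleP=> i; rewrite ffunE leq_addr. Qed.
Lemma vle_add2r u v w : vle u v -> vle (vadd u w) (vadd v w).
Proof. move=> /vleP H; apply/vleP=> i; rewrite !ffunE leq_add2r; exact: H. Qed.
Lemma vsubK u v : vle u v -> vadd u (vsub v u) = v.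
Proof. move=> /vleP H; apply/ffunP=> i; rewrite !ffunE subnKC //; exact: H. Qed.
Lemma vsize_add u v : vsize (vadd u v) = vsize u + vsize v.
Proof. rewrite /vsize -big_split /=; apply: eq_bigr=> i _; by rewrite ffunE. Qed.
Lemma vsize_sub u v : vle u v -> vsize (vsub v u) + vsize u = vsize v.
Proof. move=> H; by rewrite addnC -vsize_add vsubK. Qed.
Lemma vsize0 u : vsize u = 0 -> u = vzero.
Proof.
move=> H; apply/ffunP=> i; rewrite ffunE; apply/eqP; rewrite -leqn0.
by rewrite -H /vsize (bigD1 i) //= leq_addr.
Qed.
Lemma vsize_vzero : vsize (@vzero k) = 0.
Proof. by rewrite /vsize big1 // => i _; rewrite ffunE. Qed.
Lemma vle_size_eq u v : vle u v -> vsize u = vsize v -> u = v.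
Proof.
move=> /vleP H E; apply/ffunP=> i; apply/eqP; rewrite eqn_leq H /=.
have := vsize_sub (introT (vleP _ _) H); rewrite E -{2}(add0n (vsize v)) => /eqP.
rewrite eqn_add2r => /eqP/vsize0 /ffunP /(_ i); rewrite !ffunE => /eqP.
by rewrite subn_eq0.
Qed.
End V.

Lemma ex_minimizer (A : Type) (P : A -> Prop) (mu : A -> nat) :
  (exists a, P a) -> exists a, P a /\ forall b, P b -> mu a <= mu b.
Proof.
move=> [a0 Pa0]; apply: NNPP => Hn.
suff H : forall n b, P b -> n <= mu b by have := H (mu a0).+1 a0 Pa0; rewrite ltnn.
elim=> [//|n IH] b Pb.
rewrite ltn_neqAle IH // andbT; apply/negP=> /eqP E.
apply: Hn; exists b; split=> // c Pc; rewrite -E; exact: IH.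
Qed.

Definition incr (f : nat -> nat) := forall n, f n < f n.+1.

Lemma incr_le f : incr f -> forall a b, a <= b -> f a <= f b.
Proof.
move=> H a b /subnKC <-; elim: (b - a) => [|d IH]; first by rewrite addn0.
rewrite addnS; exact: leq_trans IH (ltnW (H _)).
Qed.
Lemma incr_lt f : incr f -> forall a b, a < b -> f a < f b.
Proof. move=> H a b ab; exact: leq_trans (H a) (incr_le H ab). Qed.
Lemma incr_ge f : incr f -> forall n, n <= f n.
Proof. move=> H; elim=> // n IH; exact: leq_ltn_trans IH (H n). Qed.

Lemma chain_le (T : Type) (R : T -> T -> bool) (g : nat -> T) :
  (forall x y z, R x y -> R y z -> R x z) -> (forall x, R x x) ->
  (forall n, R (g n) (g n.+1)) -> forall a b, a <= b -> R (g a) (g b).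
Proof.
move=> Rt Rr H a b /subnKC <-; elim: (b - a) => [|d IH]; first by rewrite addn0.
rewrite addnS; exact: Rt IH (H _).
Qed.

Lemma dickson_nat (g : nat -> nat) :
  exists phi, incr phi /\ forall n, g (phi n) <= g (phi n.+1).
Proof.
have : forall n, exists m, n <= m /\ forall j, n <= j -> g m <= g j.
  move=> n; have [m [nm Hm]] := ex_minimizer (P := fun m => n <= m) g (ex_intro _ n (leqnn n)).
  by exists m; split.
move=> /functional_choice [mf Hmf].
pose phi := fix phi n := if n is n'.+1 then mf (phi n').+1 else mf 0.
exists phi; split.
- move=> n; rewrite [phi n.+1]/=; exact: (Hmf (phi n).+1).1.
- move=> n; rewrite [phi n.+1]/=.
  have E : forall m, phi m = mf (if m is m'.+1 then (phi m').+1 else 0) by case.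
  rewrite (E n); apply: (Hmf _).2.
  case: n E => [|n] E; first exact: leq_trans (leq0n _) (Hmf _).1.
  apply: leq_trans (Hmf (phi n).+1).1 _; apply: ltnW; exact: (Hmf _).1.
Qed.

Lemma dickson (k : nat) (f : nat -> vec k) :
  exists phi, incr phi /\ forall n, vle (f (phi n)) (f (phi n.+1)).
Proof.
suff H : forall j, exists phi, incr phi /\
    forall n (i : 'I_k), i < j -> f (phi n) i <= f (phi n.+1) i.
  have [phi [H1 H2]] := H k; exists phi; split=> // n; apply/forallP=> i; exact: H2.
elim=> [|j [phi [Hi Hm]]]; first by exists id; split=> // n.
case: (ltnP j k) => jk; last first.
  exists phi; split=> // n i _; apply: Hm; exact: leq_trans (ltn_ord i) jk.
have [psi [Hpi Hpm]] := dickson_nat (fun n => f (phi n) (Ordinal jk)).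
exists (fun n => phi (psi n)); split.
  move=> n; exact: incr_lt (Hpi n).
move=> n i; rewrite ltnS leq_eqVlt => /orP [/eqP E|lt].
  have -> : i = Ordinal jk by apply: val_inj.
  exact: Hpm.
apply: (chain_le (R := fun x y => x <= y) (g := fun n => f (phi n) i)).
- move=> x y z a b; exact: leq_trans a b.
- move=> x; exact: leqnn.
- by move=> m; apply: Hm.
- exact: ltnW (Hpi n).
Qed.

Definition Good (X : Type) (L : X -> X -> Prop) (s : nat -> X) := forall n, L (s n) (s n.+1).

Lemma mbs (X : Type) (L : X -> X -> Prop) (mu : X -> nat) (s0 : nat -> X) :
  Good L s0 -> exists s, Good L s /\
    forall n t, Good L t -> (forall i, i < n -> t i = s i) -> mu (s n) <= mu (t n).
Proof.
move=> G0.
pose Q (p : nat -> X) n t := Good L t /\ forall i, i < n -> t i = p i.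
have : forall pn : (nat -> X) * nat, exists t, Good L pn.1 ->
    Q pn.1 pn.2 t /\ forall t', Q pn.1 pn.2 t' -> mu (t pn.2) <= mu (t' pn.2).
  case=> p n /=; case: (classic (Good L p)) => Gp; last by exists p.
  have [t [Qt Ht]] := ex_minimizer (P := Q p n) (fun t => mu (t n)) (ex_intro _ p (conj Gp (fun _ _ => erefl))).
  by exists t.
move=> /functional_choice [st Hst].
have [seqs [E0 ES]] : exists seqs : nat -> nat -> X,
    seqs 0 = st (s0, 0) /\ forall m, seqs m.+1 = st (seqs m, m.+1).
  by exists (fix seqs n := if n is m.+1 then st (seqs m, m.+1) else st (s0, 0)).
have Gs : forall n, Good L (seqs n).
  elim=> [|n IH]; [rewrite E0; exact: (Hst (s0, 0) G0).1.1 | rewrite ES; exact: (Hst (seqs n, n.+1) IH).1.1].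
have Ag1 : forall n i, i <= n -> seqs n.+1 i = seqs n i.
  move=> n i Hi; rewrite ES; exact: (Hst (seqs n, n.+1) (Gs n)).1.2 i Hi.
have Ag : forall n m i, i <= n -> n <= m -> seqs m i = seqs n i.
  move=> n m i Hi /subnKC <-; elim: (m - n) => [|d IH]; first by rewrite addn0.
  rewrite addnS Ag1; [exact: IH | exact: leq_trans Hi (leq_addr _ _)].
exists (fun n => seqs n n); split.
  move=> n /=; have := Gs n.+1 n; by rewrite Ag1.
case=> [|n] t Gt Ht.
  rewrite E0; apply: (Hst (s0, 0) G0).2; split=> // i; by rewrite ltn0.
rewrite ES; apply: (Hst (seqs n, n.+1) (Gs n)).2; split=> // i Hi.
rewrite Ht //; symmetry; apply: Ag => //.
Qed.

Section Sl.
Variable k : nat.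
Variable S : vec k -> Prop.
Hypothesis HS : slice S.

Lemma vle_add2l (u v w : vec k) : vle v w -> vle (vadd u v) (vadd u w).
Proof. rewrite ![vadd u _]vaddC; exact: vle_add2r. Qed.

Lemma mono (a b w : vec k) : S a -> S b -> vle a b -> S (vadd a w) -> S (vadd b w).
Proof.
move=> Sa Sb ab Saw.
have := HS Sa Saw (_ : S (vadd a (vsub b a))); rewrite vsubK //.
move=> /(_ Sb); by rewrite vaddA [vadd w _]vaddC -vaddA vsubK.
Qed.

Lemma Mu_sound (u m : vec k) : S u -> Mu S u m -> S (vadd u m).
Proof.
move=> Su; elim=> [|x m' [[Sx _] _] _ IH]; first by rewrite vadd0.
rewrite -vaddA; exact: HS Su Sx IH.
Qed.

Lemma genmon_ext (X Y : vec k -> Prop) m :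
  (forall v, X v <-> Y v) -> genmon (Defs.minset X) m -> genmon (Defs.minset Y) m.
Proof.
move=> E; elim=> [|x m' [Xx Hx] _ IH]; first exact: genmon0.
apply: genmonS IH; split; first by apply/E.
move=> y /E Yy; exact: Hx.
Qed.

Lemma claim n (d u : vec k) : vsize d <= n -> S u ->
  (forall w, S (vadd u w) <-> S (vadd (vadd u d) w)) -> Mu S u d.
Proof.
elim: n d u => [|n IH] d u Hs Su Heq.
  move: Hs; rewrite leqn0 => /eqP /vsize0 ->; exact: genmon0.
case: (eqVneq (vsize d) 0) => [/vsize0 -> | dnz]; first exact: genmon0.
have Sd : S (vadd u d) by have := Heq vzero; rewrite !vadd0 => -[H _]; exact: H.
have dnz' : d <> vzero by move=> E; move: dnz; rewrite E vsize_vzero eqxx.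
have [p [[[Sp pnz] Hpd] Hmin]] := ex_minimizer
   (P := fun p => (S (vadd u p) /\ p <> vzero) /\ vle p d) (@vsize k)
   (ex_intro _ d (conj (conj Sd dnz') (vle_refl d))).
have Hmp : Defs.minset (fun v => shift S u v /\ v <> vzero) p.
  split; first by split.
  move=> y [Sy ynz] yp; apply: vle_size_eq => //.
  apply/eqP; rewrite eqn_leq Hmin /=; last by split=> //; exact: vle_trans yp Hpd.
  by rewrite -(vsize_sub yp) leq_addl.
have Eud : vadd (vadd u p) (vsub d p) = vadd u d by rewrite vaddA vsubK.
have upd : vle (vadd u p) (vadd u d) by apply: vle_add2l.
have Ht : forall w, S (vadd (vadd u p) w) <-> S (vadd u w).
  move=> w; split=> H.
    by apply/Heq; apply: mono H.
  by apply: mono H => //; exact: vle_addr.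
have Hsz : vsize (vsub d p) <= n.
  have := vsize_sub Hpd; have : vsize p <> 0 by move/vsize0.
  move: Hs; lia.
have := IH (vsub d p) (vadd u p) Hsz Sp.
rewrite Eud => /(_ (fun w => conj (fun H => proj1 (Heq w) (proj1 (Ht w) H))
                                    (fun H => proj2 (Ht w) (proj2 (Heq w) H)))) H.
rewrite -(vsubK Hpd); apply: genmonS Hmp _.
apply: genmon_ext H => v; rewrite /shift Ht; done.
Qed.

Definition Lb (a b : vec k * vec k) :=
  S a.1 /\ vle a.1 b.1 /\ S (vadd b.1 a.2) /\ ~ S (vadd a.1 a.2).

End Sl.

Section Sl.
Variable k : nat.
Variable S : vec k -> Prop.
Hypothesis HS : slice S.

Lemma no_mbs (s : nat -> vec k * vec k) : Good (Lb S) s ->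
  (forall n t, Good (Lb S) t -> (forall i, i < n -> t i = s i) ->
     vsize (s n).2 <= vsize (t n).2) -> False.
Proof.
move=> Gs Hmin.
pose D n := (s n).1; pose v n := (s n).2.
have SD n : S (D n) := (Gs n).1.
have Dle : forall a b, a <= b -> vle (D a) (D b).
  exact: (chain_le (R := @vle k) (g := D) (@vle_trans k) (@vle_refl k) (fun n => (Gs n).2.1)).
have Rm : forall a b w, a <= b -> S (vadd (D a) w) -> S (vadd (D b) w).
  move=> a b w ab H; exact: (mono HS (SD a) (SD b) (Dle a b ab) H).
have vin n : S (vadd (D n.+1) (v n)) := (Gs n).2.2.1.
have vout n : ~ S (vadd (D n) (v n)) := (Gs n).2.2.2.
have vnz n : 0 < vsize (v n).
  rewrite lt0n; apply/negP => /eqP /vsize0 E; apply: (vout n); rewrite E vadd0; exact: SD.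
have [phi [Hphi Hv]] := dickson v.
pose a := phi 0. pose b m := phi m.+1.
have ab m : a < b m.
  exact (incr_lt Hphi (ltn0Sn m)).
have bb m : b m < b m.+1 by rewrite /b; exact: Hphi m.+1.
have vab m : vle (v a) (v (b m)).
  exact: (chain_le (R := @vle k) (g := fun n => v (phi n)) (@vle_trans k) (@vle_refl k) Hv (leq0n m.+1)).
pose E m := if m is m'.+1 then vadd (D (b m').+1) (v a) else D (b 0).
pose t n := if n < b 0 then s n else (E (n - b 0), vsub (v (b (n - b 0))) (v a)).
have HE : forall m, Lb S (E m, vsub (v (b m)) (v a)) (E m.+1, vsub (v (b m.+1)) (v a)).
  move=> m; rewrite /Lb /=; split; [|split; [|split]].
  - case: m => [|m] /=; first exact: SD.
    apply: Rm (vin a); exact: ltnW (ab m).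
  - case: m => [|m] /=.
      exact: vle_trans (Dle _ _ (leqnSn (b 0))) (vle_addr _ _).
    apply: vle_add2r; apply: Dle; exact: ltnW (bb m).
  - rewrite vaddA vsubK //; exact: vin.
  - case: m => [|m] /= H.
      apply: (vout (b 0)).
      have H1 : S (vadd (D (b 0)) (v a)) by apply: Rm (vin a); exact: ab 0.
      have := HS (SD _) H1 H; by rewrite vaddA vsubK.
    move: H; rewrite vaddA vsubK // => H.
    apply: (vout (b m.+1)); apply: Rm H; exact: bb m.
have Gt : Good (Lb S) t.
  move=> n; rewrite /t; case: (ltnP n.+1 (b 0)) => H1.
    rewrite (ltn_trans (ltnSn n) H1); exact: Gs.
  case: (ltnP n (b 0)) => H2.
    have E0 : b 0 = n.+1 by apply/eqP; rewrite eqn_leq H1 H2.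
    rewrite -E0 subnn /=.
    have := Gs n; rewrite /Lb /= -/(D n.+1) -/(D (b 0)) -E0 //.
  rewrite subSn //; exact: HE.
have Agr : forall i, i < b 0 -> t i = s i by move=> i Hi; rewrite /t Hi.
have := Hmin (b 0) t Gt Agr; rewrite /t ltnn subnn /= -/(v (b 0)).
have := vsize_sub (vab 0); have := vnz a; lia.
Qed.

Definition equivS (a b : vec k) := forall w, S (vadd a w) <-> S (vadd b w).

Lemma cover : exists F : seq (vec k), (forall u, u \in F -> S u) /\
  forall x, S x -> exists2 u, u \in F & vle u x /\ equivS u x.
Proof.
apply: NNPP => Hn.
have Hpick : forall L : seq (vec k), exists x, (forall u, u \in L -> S u) ->
    S x /\ forall u, u \in L -> ~ (vle u x /\ equivS u x).
  move=> L; case: (classic (forall u, u \in L -> S u)) => HL; last by exists vzero.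
  apply: NNPP => H2; apply: Hn; exists L; split=> // x Sx.
  apply: NNPP => H3; apply: H2; exists x => _; split=> // u uL [H4 H5].
  by apply: H3; exists u.
move: Hpick => /functional_choice [pick Hp].
have [Ls [L0 LS]] : exists Ls : nat -> seq (vec k),
    Ls 0 = [::] /\ forall m, Ls m.+1 = pick (Ls m) :: Ls m.
  by exists (fix Ls n := if n is m.+1 then pick (Ls m) :: Ls m else [::]).
pose x n := pick (Ls n).
have HL : forall n u, u \in Ls n -> S u.
  elim=> [|n IH] u; first by rewrite L0.
  rewrite LS in_cons => /orP [/eqP ->|]; [exact: (Hp _ IH).1 | exact: IH].
have Hx : forall n, S (x n) by move=> n; exact: (Hp _ (HL n)).1.
have Hmem : forall i j, i < j -> x i \in Ls j.
  move=> i; elim=> // j IH; rewrite ltnS leq_eqVlt LS in_cons => /orP [/eqP->|/IH ->].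
    by rewrite eqxx.
  by rewrite orbT.
have [phi [Hphi Hphim]] := dickson x.
pose D m := x (phi m).
have Hw : forall m, exists w, S (vadd (D m.+1) w) /\ ~ S (vadd (D m) w).
  move=> m; apply: NNPP => H.
  apply: ((Hp _ (HL (phi m.+1))).2 (x (phi m))); first exact: Hmem (Hphi m).
  split; first exact: Hphim.
  move=> w; split=> H'; first exact (mono HS (Hx _) (Hx _) (Hphim m) H').
  apply: NNPP => H''; apply: H; exists w; by split.
move: Hw => /functional_choice [v Hv].
have G0 : Good (Lb S) (fun m => (D m, v m)).
  move=> m; rewrite /Lb /=; split; first exact: Hx.
  split; first exact: Hphim.
  exact: Hv m.
have [s [Gs Hmin]] := mbs (fun a : vec k * vec k => vsize a.2) G0.
exact: no_mbs Gs Hmin.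
Qed.

End Sl.

Unset Implicit Arguments.
Theorem lemma6 (k : nat) (S : vec k -> Prop) :
  slice S ->
  exists F : seq (vec k),
    (forall u, u \in F -> S u) /\
    (forall x : vec k,
        S x <-> exists2 u, u \in F & exists m, Mu S u m /\ x = vadd u m).
Proof.
move=> HS; have [F [HF Hc]] := cover HS.
exists F; split=> // x; split.
  move=> Sx; have [u uF [ux Hux]] := Hc x Sx.
  exists u => //; exists (vsub x u); split; last by rewrite vsubK.
  apply: (@claim k S HS (vsize (vsub x u))) => //; first exact: HF.
  move=> w; rewrite vsubK //; exact: Hux.
move=> [u uF [m [Mm ->]]]; exact (Mu_sound HS (HF u uF) Mm).
Qed.
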